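(* Let $G$ be a second countable locally compact group and $\Omega$ a homogeneous space of $G$. Let $F\subset P$ and $F\subset P'$ be closed subgroups of $G$, let $Y,Y'$ be closed subsets of $\Omega$ and let $M\subset G$. Suppose that (a) $PY=Y$ and $P'Y'=Y'$; (b) $mY\cap Y'\neq\emptyset$ for every $m\in M$; (c) $Y$ is a compact $F$-minimal subset. Then $hY\subset Y'$ for every $h\in N_G(F)\cap\overline{P'MP}$.
   Context: $N_G(F)$ denotes the normalizer of $F$ in $G$. For a closed subgroup $F\subset G$, a closed $F$-invariant subset $Y\subset\Omega$ is called $F$-minimal if it contains no proper nonempty closed $F$-invariant subset, i.e. $Fy$ is dense in $Y$ for every $y\in Y$. *)

(* Defs.v *)
From Stdlib Require Import List.

Set Implicit Arguments.

Record Topology (X : Type) := {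
  opn : (X -> Prop) -> Prop;
  opn_full : opn (fun _ => True);
  opn_inter : forall U V, opn U -> opn V -> opn (fun x => U x /\ V x);
  opn_union : forall (I : Type) (U : I -> X -> Prop),
      (forall i, opn (U i)) -> opn (fun x => exists i, U i x)
}.

Section Topo.
Variables (X : Type) (T : Topology X).

Definition subset (A B : X -> Prop) : Prop := forall x, A x -> B x.

Definition closed (A : X -> Prop) : Prop := opn T (fun x => ~ A x).

Definition closure (A : X -> Prop) (x : X) : Prop :=
  forall U, opn T U -> U x -> exists y, U y /\ A y.

Definition compact (K : X -> Prop) : Prop :=
  forall (I : Type) (U : I -> X -> Prop),
    (forall i, opn T (U i)) ->
    (forall x, K x -> exists i, U i x) ->
    exists l : list I, forall x, K x -> exists i, In i l /\ U i x.

Definition hausdorff : Prop :=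
  forall x y, x <> y -> exists U V, opn T U /\ opn T V /\ U x /\ V y /\
    forall z, U z -> V z -> False.

Definition locally_compact : Prop :=
  forall x, exists K U, compact K /\ opn T U /\ U x /\ subset U K.

Definition second_countable : Prop :=
  exists B : nat -> X -> Prop, (forall n, opn T (B n)) /\
    forall U x, opn T U -> U x -> exists n, B n x /\ subset (B n) U.
End Topo.

Definition continuous (X Y : Type) (TX : Topology X) (TY : Topology Y)
  (f : X -> Y) : Prop :=
  forall V, opn TY V -> opn TX (fun x => V (f x)).

Definition continuous2 (X Y Z : Type) (TX : Topology X) (TY : Topology Y)
  (TZ : Topology Z) (f : X -> Y -> Z) : Prop :=
  forall W x y, opn TZ W -> W (f x y) ->
    exists U V, opn TX U /\ opn TY V /\ U x /\ V y /\
      forall x' y', U x' -> V y' -> W (f x' y').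

Definition open_map (X Y : Type) (TX : Topology X) (TY : Topology Y)
  (f : X -> Y) : Prop :=
  forall U, opn TX U -> opn TY (fun y => exists x, U x /\ f x = y).

Definition is_group (G : Type) (mul : G -> G -> G) (inv : G -> G) (one : G)
  : Prop :=
  (forall a b c, mul a (mul b c) = mul (mul a b) c) /\
  (forall a, mul one a = a) /\ (forall a, mul a one = a) /\
  (forall a, mul (inv a) a = one) /\ (forall a, mul a (inv a) = one).

Definition is_topological_group (G : Type) (TG : Topology G)
  (mul : G -> G -> G) (inv : G -> G) (one : G) : Prop :=
  is_group mul inv one /\ hausdorff TG /\
  continuous2 TG TG TG mul /\ continuous TG TG inv.

Definition is_lcsc_group (G : Type) (TG : Topology G)
  (mul : G -> G -> G) (inv : G -> G) (one : G) : Prop :=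
  is_topological_group TG mul inv one /\ locally_compact TG /\
  second_countable TG.

Definition is_subgroup (G : Type) (mul : G -> G -> G) (inv : G -> G)
  (one : G) (H : G -> Prop) : Prop :=
  H one /\ (forall a b, H a -> H b -> H (mul a b)) /\
  (forall a, H a -> H (inv a)).

Definition is_closed_subgroup (G : Type) (TG : Topology G)
  (mul : G -> G -> G) (inv : G -> G) (one : G) (H : G -> Prop) : Prop :=
  is_subgroup mul inv one H /\ closed TG H.

Definition normalizer (G : Type) (mul : G -> G -> G) (inv : G -> G)
  (F : G -> Prop) (h : G) : Prop :=
  forall f, F f <-> F (mul h (mul f (inv h))).

Definition set_prod3 (G : Type) (mul : G -> G -> G) (A B C : G -> Prop)
  (g : G) : Prop :=
  exists a b c, A a /\ B b /\ C c /\ g = mul a (mul b c).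

(* Omega is a homogeneous space of G: a Hausdorff G-space with a (jointly)
   continuous transitive action whose orbit maps g |-> g.w are open; this
   is exactly the quotient G/H (H = Stab(w), closed) with quotient topology. *)
Definition is_homogeneous_space (G Om : Type) (TG : Topology G)
  (mul : G -> G -> G) (one : G) (TO : Topology Om) (act : G -> Om -> Om)
  : Prop :=
  hausdorff TO /\
  (forall w, act one w = w) /\
  (forall g h w, act (mul g h) w = act g (act h w)) /\
  continuous2 TG TO TO act /\
  (forall w w', exists g, act g w = w') /\
  (forall w, open_map TG TO (fun g => act g w)).

Definition act_set (G Om : Type) (act : G -> Om -> Om) (A : G -> Prop)
  (Y : Om -> Prop) (w : Om) : Prop :=
  exists a y, A a /\ Y y /\ w = act a y.

Definition set_eq (X : Type) (A B : X -> Prop) : Prop := forall x, A x <-> B x.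

Definition invariant (G Om : Type) (act : G -> Om -> Om) (F : G -> Prop)
  (Y : Om -> Prop) : Prop :=
  forall f y, F f -> Y y -> Y (act f y).

Definition minimal (G Om : Type) (TO : Topology Om) (act : G -> Om -> Om)
  (F : G -> Prop) (Y : Om -> Prop) : Prop :=
  closed TO Y /\ invariant act F Y /\
  forall Z : Om -> Prop, closed TO Z -> invariant act F Z -> subset Z Y ->
    (exists z, Z z) -> subset Y Z.

(* Main.v *)
Require Import Defs.
From Stdlib Require Import List Classical FunctionalExtensionality PropExtensionality.

Lemma opn_ext (X : Type) (T : Topology X) (A B : X -> Prop) :
  (forall x, A x <-> B x) -> opn T A -> opn T B.
Proof.
  intros H HA. replace B with A; auto.
  apply functional_extensionality; intro x; apply propositional_extensionality; auto.
Qed.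

Lemma opn_list_inter (X I : Type) (T : Topology X) (U : I -> X -> Prop) (l : list I) :
  (forall i, opn T (U i)) -> opn T (fun x => forall i, In i l -> U i x).
Proof.
  intros HU; induction l as [|a l IH].
  - apply (@opn_ext _ T (fun _ => True)); [|apply opn_full].
    intro x; split; [intros _ i []|auto].
  - apply (@opn_ext _ T (fun x => U a x /\ (forall i, In i l -> U i x))).
    + intro x; split.
      * intros [H1 H2] i [<-|Hi]; auto.
      * intros H; split; [apply H; left; auto| intros i Hi; apply H; right; auto].
    + apply opn_inter; auto.
Qed.

Lemma opn_preimage_act (G Om : Type) (TG : Topology G) (TO : Topology Om)
  (act : G -> Om -> Om) (h : G) :
  continuous2 TG TO TO act ->
  forall V, opn TO V -> opn TO (fun y => V (act h y)).
Proof.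
  intros Hc V HV.
  set (I := { W : Om -> Prop | opn TO W /\ forall y, W y -> V (act h y) }).
  apply (@opn_ext _ TO (fun x => exists i : I, proj1_sig i x)).
  - intro x; split.
    + intros [[W [HW1 HW2]] Hx]; simpl in Hx; auto.
    + intros Hx. destruct (Hc V h x HV Hx) as [U [W [HU [HW [Uh [Wx Hall]]]]]].
      assert (Hi : opn TO W /\ forall y, W y -> V (act h y)) by
        (split; auto; intros; apply Hall; auto).
      exists (exist _ W Hi); simpl; auto.
  - apply opn_union. intros i; exact (proj1 (proj2_sig i)).
Qed.

Theorem lemma3p2 (G Om : Type) (TG : Topology G) (mul : G -> G -> G)
  (inv : G -> G) (one : G) (TO : Topology Om) (act : G -> Om -> Om)
  (HG : is_lcsc_group TG mul inv one)
  (HOm : is_homogeneous_space TG mul one TO act)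
  (F P P' : G -> Prop) (Y Y' : Om -> Prop) (M : G -> Prop)
  (HF : is_closed_subgroup TG mul inv one F)
  (HP : is_closed_subgroup TG mul inv one P)
  (HP' : is_closed_subgroup TG mul inv one P')
  (HFP : subset F P) (HFP' : subset F P')
  (HY : closed TO Y) (HY' : closed TO Y')
  (Ha : set_eq (act_set act P Y) Y /\ set_eq (act_set act P' Y') Y')
  (Hb : forall m, M m -> exists y, Y y /\ Y' (act m y))
  (Hc : compact TO Y /\ minimal TO act F Y) :
  forall h, normalizer mul inv F h -> closure TG (set_prod3 mul P' M P) h ->
    subset (act_set act (fun g => g = h) Y) Y'.
Proof.
  intros h Hn Hcl.
  destruct HG as [[[Hassoc [H1l [H1r [Hil Hir]]]] _] _].
  destruct HOm as [_ [Hact1 [Hactm [Hactc _]]]].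
  destruct Ha as [HaP HaP'].
  destruct Hc as [Hcomp [_ [HinvY Hmin]]].
  destruct HP as [[_ [_ HPinv]] _].
  assert (Hmeet : exists y, Y y /\ Y' (act h y)).
  { apply NNPP; intro Hno.
    set (W := fun w => ~ Y' w).
    assert (HW : opn TO W) by exact HY'.
    set (I := { p : (G -> Prop) * (Om -> Prop) |
                opn TG (fst p) /\ opn TO (snd p) /\ fst p h /\
                forall g y', fst p g -> snd p y' -> W (act g y') }).
    destruct (Hcomp I (fun i => snd (proj1_sig i))) as [l Hl].
    - intros i; exact (proj1 (proj2 (proj2_sig i))).
    - intros x Yx.
      assert (Wx : W (act h x)) by (intro HYx; apply Hno; exists x; auto).
      destruct (Hactc W h x HW Wx) as [U [V [HU [HV [Uh [Vx Hall]]]]]].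
      assert (Hi : opn TG (fst (U, V)) /\ opn TO (snd (U, V)) /\ fst (U, V) h /\
                forall g y', fst (U, V) g -> snd (U, V) y' -> W (act g y'))
        by (simpl; auto).
      exists (exist _ (U, V) Hi); simpl; auto.
    - set (U := fun g => forall i : I, In i l -> fst (proj1_sig i) g).
      assert (HU : opn TG U).
      { apply opn_list_inter. intros i; exact (proj1 (proj2_sig i)). }
      destruct (Hcl U HU) as [g [Ug Hg]].
      { intros i _; exact (proj1 (proj2 (proj2 (proj2_sig i)))). }
      destruct Hg as [p' [m [p [Hp' [Hm [Hp Hgeq]]]]]].
      destruct (Hb m Hm) as [y0 [Yy0 Y'y0]].
      set (y1 := act (inv p) y0).
      assert (Yy1 : Y y1).
      { apply HaP. exists (inv p), y0; auto. }
      assert (Hgy1 : act g y1 = act p' (act m y0)).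
      { unfold y1; rewrite Hgeq, !Hactm, <- (Hactm p (inv p)), Hir, Hact1; auto. }
      destruct (Hl y1 Yy1) as [[q [Hq1 [Hq2 [Hq3 Hq4]]]] [Hin Hq]].
      apply (Hq4 g y1); auto.
      + apply (Ug _ Hin).
      + rewrite Hgy1. apply HaP'. exists p', (act m y0); auto. }
  set (Z := fun y => Y y /\ Y' (act h y)).
  assert (HZ : subset Y Z).
  { apply Hmin.
    - unfold closed.
      apply (@opn_ext _ TO (fun x => exists b : bool,
                 if b then ~ Y x else ~ Y' (act h x))).
      + intro x; split.
        * intros [[|] Hb0] [H1 H2]; auto.
        * intros Hx. destruct (classic (Y x)) as [Yx|Yx].
          -- exists false. intro; apply Hx; split; auto.
          -- exists true; auto.
      + apply opn_union. intros [|].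
        * exact HY.
        * apply (@opn_preimage_act G Om TG TO act h Hactc (fun w => ~ Y' w)). exact HY'.
    - intros f y Hf [Yy Y'y]. split; [apply HinvY; auto|].
      assert (Heq : act h (act f y) = act (mul h (mul f (inv h))) (act h y)).
      { rewrite <- !Hactm, <- !Hassoc, Hil, H1r; auto. }
      rewrite Heq. apply HaP'. exists (mul h (mul f (inv h))), (act h y).
      repeat split; auto. apply HFP'. apply (proj1 (Hn f)); auto.
    - intros y [Yy _]; auto.
    - exact Hmeet. }
  intros w [a [y [-> [Yy ->]]]]. apply (HZ y Yy).
Qed.
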